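(* Let $X$ be a vector lattice and let $l : X \to \mathbb{R}$ be an order bounded linear functional with positive part $l_+ \neq 0$ and negative part $l_- \neq 0$. Then $\ker(l)$ is a Grothendieck subspace of $X$ if and only if $l_+$ and $l_-$ are Riesz homomorphisms on $X$, which in turn holds if and only if $\ker(l)$ is a Riesz subspace of $X$.
   Context: For an order bounded functional $l$, $l_+ = l \vee 0$ and $l_- = (-l)\vee 0$ in the Riesz space of order bounded functionals, so $l = l_+ - l_-$. A Riesz homomorphism is a linear functional preserving finite lattice operations. A Riesz subspace is a linear subspace closed under finite lattice operations. A linear subspace $H$ of a vector lattice is called a Grothendieck subspace (or $G$-space) if for all $x, y \in H$ one has $x \vee y \vee 0 + x \wedge y \wedge 0 \in H$. *)

(* Defs.v *)
From HB Require Import structures.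
From mathcomp Require Import all_boot all_order all_algebra.
From mathcomp Require Import reals.
Set Implicit Arguments. Unset Strict Implicit. Unset Printing Implicit Defensive.
Import Order.TTheory GRing.Theory Num.Theory.
Local Open Scope ring_scope.

Section VL.
Variables (R : realType) (X : lmodType R).
Variables (le : X -> X -> Prop) (join meet : X -> X -> X).

Record vector_lattice : Prop := VectorLattice {
  vl_refl : forall x, le x x;
  vl_antisym : forall x y, le x y -> le y x -> x = y;
  vl_trans : forall x y z, le x y -> le y z -> le x z;
  vl_add : forall x y z, le x y -> le (x + z) (y + z);
  vl_scale : forall (a : R) x y, 0 <= a -> le x y -> le (a *: x) (a *: y);
  vl_join_ubl : forall x y, le x (join x y);
  vl_join_ubr : forall x y, le y (join x y);
  vl_join_least : forall x y z, le x z -> le y z -> le (join x y) z;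
  vl_meet_lbl : forall x y, le (meet x y) x;
  vl_meet_lbr : forall x y, le (meet x y) y;
  vl_meet_greatest : forall x y z, le z x -> le z y -> le z (meet x y)
}.

Definition lin_functional (f : X -> R) : Prop :=
  forall (a : R) x y, f (a *: x + y) = a * f x + f y.

Definition order_bounded (f : X -> R) : Prop :=
  forall a b, exists M : R, forall x, le a x -> le x b -> `|f x| <= M.

Definition ob_functional (f : X -> R) : Prop :=
  lin_functional f /\ order_bounded f.

(* the (pointwise-on-the-positive-cone) order of the space of functionals:
   f <= g iff g - f is a positive functional *)
Definition fle (f g : X -> R) : Prop := forall x, le 0 x -> f x <= g x.

Definition is_sup_with_zero (f p : X -> R) : Prop :=
  [/\ ob_functional p, fle f p, fle (fun _ => 0) p &
      forall g, ob_functional g -> fle f g -> fle (fun _ => 0) g -> fle p g].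

Definition is_pos_part (l lp : X -> R) : Prop := is_sup_with_zero l lp.
Definition is_neg_part (l ln : X -> R) : Prop := is_sup_with_zero (fun x => - l x) ln.

Definition riesz_hom (f : X -> R) : Prop :=
  [/\ lin_functional f,
      forall x y, f (join x y) = Num.max (f x) (f y) &
      forall x y, f (meet x y) = Num.min (f x) (f y)].

Definition lin_subspace (H : X -> Prop) : Prop :=
  H 0 /\ forall (a : R) x y, H x -> H y -> H (a *: x + y).

Definition riesz_subspace (H : X -> Prop) : Prop :=
  [/\ lin_subspace H,
      forall x y, H x -> H y -> H (join x y) &
      forall x y, H x -> H y -> H (meet x y)].

Definition G_subspace (H : X -> Prop) : Prop :=
  lin_subspace H /\
  forall x y, H x -> H y -> H (join (join x y) 0 + meet (meet x y) 0).

Definition ker (f : X -> R) : X -> Prop := fun x => f x = 0.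

End VL.

(* Main.v *)
Require Import Defs.
From HB Require Import structures.
From mathcomp Require Import all_boot all_order all_algebra.
From mathcomp Require Import reals classical_sets.
From mathcomp Require Import ring lra.
From Stdlib Require Import Classical FunctionalExtensionality.
Import Order.TTheory GRing.Theory Num.Theory.
Local Open Scope classical_set_scope.
Local Open Scope ring_scope.
Set Implicit Arguments. Unset Strict Implicit. Unset Printing Implicit Defensive.

Section Lat.
Variables (R : realType) (X : lmodType R) (le : X -> X -> Prop) (join meet : X -> X -> X).
Hypothesis VL : vector_lattice le join meet.

Lemma L_refl x : le x x. Proof. apply: (vl_refl VL). Qed.
Lemma L_trans x y z : le x y -> le y z -> le x z. Proof. apply: (vl_trans VL). Qed.
Lemma L_anti x y : le x y -> le y x -> x = y. Proof. apply: (vl_antisym VL). Qed.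
Lemma L_addr x y z : le x y -> le (x + z) (y + z). Proof. apply: (vl_add VL). Qed.
Lemma L_addl x y z : le x y -> le (z + x) (z + y).
Proof. by move=> h; rewrite ![z + _]addrC; apply: L_addr. Qed.
Lemma L_add2 a b c d : le a b -> le c d -> le (a + c) (b + d).
Proof. move=> h1 h2; exact: (L_trans (L_addr c h1) (L_addl b h2)). Qed.
Lemma L_sub0 x y : le x y -> le 0 (y - x).
Proof. by move=> h; rewrite -(subrr x); apply: L_addr. Qed.
Lemma L_0sub x y : le 0 (y - x) -> le x y.
Proof. by move=> h; have := L_addr x h; rewrite add0r subrK. Qed.
Lemma L_opp x y : le x y -> le (- y) (- x).
Proof.
move=> h; have := L_addr (- x - y) h.
by rewrite addrA subrr add0r addrCA subrr addr0.
Qed.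
Lemma L_scale (a : R) x y : 0 <= a -> le x y -> le (a *: x) (a *: y).
Proof. apply: (vl_scale VL). Qed.
Lemma L_jl x y : le x (join x y). Proof. apply: (vl_join_ubl VL). Qed.
Lemma L_jr x y : le y (join x y). Proof. apply: (vl_join_ubr VL). Qed.
Lemma L_jlub x y z : le x z -> le y z -> le (join x y) z. Proof. apply: (vl_join_least VL). Qed.
Lemma L_ml x y : le (meet x y) x. Proof. apply: (vl_meet_lbl VL). Qed.
Lemma L_mr x y : le (meet x y) y. Proof. apply: (vl_meet_lbr VL). Qed.
Lemma L_mglb x y z : le z x -> le z y -> le z (meet x y). Proof. apply: (vl_meet_greatest VL). Qed.

Lemma L_movel z a b : le (z + a) b -> le a (- z + b).
Proof. by move=> h; have := L_addl (- z) h; rewrite addKr. Qed.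
Lemma L_mover z a b : le a (- z + b) -> le (z + a) b.
Proof. by move=> h; have := L_addl z h; rewrite addNKr. Qed.
Lemma L_movel' z a b : le b (z + a) -> le (- z + b) a.
Proof. by move=> h; have := L_addl (- z) h; rewrite addKr. Qed.
Lemma L_mover' z a b : le (- z + b) a -> le b (z + a).
Proof. by move=> h; have := L_addl z h; rewrite addNKr. Qed.

Lemma joinC x y : join x y = join y x.
Proof. by apply: L_anti; apply: L_jlub; [apply: L_jr|apply: L_jl|apply: L_jr|apply: L_jl]. Qed.
Lemma meetC x y : meet x y = meet y x.
Proof. by apply: L_anti; apply: L_mglb; [apply: L_mr|apply: L_ml|apply: L_mr|apply: L_ml]. Qed.
Lemma join_mono a b c d : le a b -> le c d -> le (join a c) (join b d).
Proof. move=> h1 h2; apply: L_jlub; [exact: L_trans h1 (L_jl _ _)|exact: L_trans h2 (L_jr _ _)]. Qed.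
Lemma meet_mono a b c d : le a b -> le c d -> le (meet a c) (meet b d).
Proof. move=> h1 h2; apply: L_mglb; [exact: L_trans (L_ml _ _) h1|exact: L_trans (L_mr _ _) h2]. Qed.
Lemma join_idl x y : le y x -> join x y = x.
Proof. by move=> h; apply: L_anti; [apply: L_jlub => //; apply: L_refl|apply: L_jl]. Qed.
Lemma meet_idl x y : le x y -> meet x y = x.
Proof. by move=> h; apply: L_anti; [apply: L_ml|apply: L_mglb => //; apply: L_refl]. Qed.

Lemma join_addl z x y : z + join x y = join (z + x) (z + y).
Proof.
apply: L_anti; last by apply: L_jlub; apply: L_addl; [apply: L_jl|apply: L_jr].
apply: L_mover; apply: L_jlub; apply: L_movel; [apply: L_jl|apply: L_jr].
Qed.
Lemma meet_addl z x y : z + meet x y = meet (z + x) (z + y).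
Proof.
apply: L_anti; first by apply: L_mglb; apply: L_addl; [apply: L_ml|apply: L_mr].
apply: L_mover'; apply: L_mglb; apply: L_movel'; [apply: L_ml|apply: L_mr].
Qed.

Lemma join_scale (t : R) x y : 0 < t -> t *: join x y = join (t *: x) (t *: y).
Proof.
move=> t0; have t0' : 0 <= t by apply: ltW.
have ti : 0 <= t^-1 by rewrite invr_ge0.
have K z : t^-1 *: (t *: z) = z by rewrite scalerA mulVf ?scale1r // gt_eqF.
have K' z : t *: (t^-1 *: z) = z by rewrite scalerA mulfV ?scale1r // gt_eqF.
apply: L_anti; last by apply: L_jlub; apply: L_scale => //; [apply: L_jl|apply: L_jr].
rewrite -[X in le _ X]K'; apply: L_scale => //; apply: L_jlub;
  rewrite -[X in le X _]K; apply: L_scale => //; [apply: L_jl|apply: L_jr].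
Qed.
Lemma meet_scale (t : R) x y : 0 < t -> t *: meet x y = meet (t *: x) (t *: y).
Proof.
move=> t0; have t0' : 0 <= t by apply: ltW.
have ti : 0 <= t^-1 by rewrite invr_ge0.
have K z : t^-1 *: (t *: z) = z by rewrite scalerA mulVf ?scale1r // gt_eqF.
have K' z : t *: (t^-1 *: z) = z by rewrite scalerA mulfV ?scale1r // gt_eqF.
apply: L_anti; first by apply: L_mglb; apply: L_scale => //; [apply: L_ml|apply: L_mr].
rewrite -[X in le X _]K'; apply: L_scale => //; apply: L_mglb;
  rewrite -[X in le _ X]K; apply: L_scale => //; [apply: L_ml|apply: L_mr].
Qed.

Lemma add_join_meet x y : x + y = join x y + meet x y.
Proof.
suff -> : meet x y = x + y - join x y by rewrite [RHS]addrC subrK.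
apply: L_anti.
- apply: L_0sub.
  have -> : x + y - join x y - meet x y = (x + y - meet x y) - join x y.
    by rewrite addrAC.
  apply: L_sub0; apply: L_jlub; apply: L_0sub.
  + by rewrite addrAC [x + y]addrC addrK; apply: L_sub0; apply: L_mr.
  + by rewrite addrAC addrK; apply: L_sub0; apply: L_ml.
- apply: L_mglb; apply: L_0sub.
  + by rewrite opprB opprD addrCA addNKr; apply: L_sub0; apply: L_jr.
  + by rewrite opprB opprD addrCA [y + _]addrCA subrr addr0; apply: L_sub0; apply: L_jl.
Qed.

Lemma maxR (a b : R) : a <= b -> Num.max a b = b.
Proof. move=> h; exact: max_r. Qed.
Lemma maxL (a b : R) : b <= a -> Num.max a b = a.
Proof. move=> h; exact: max_l. Qed.
Lemma minR (a b : R) : b <= a -> Num.min a b = b.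
Proof. move=> h; exact: min_r. Qed.
Lemma minL (a b : R) : a <= b -> Num.min a b = a.
Proof. move=> h; exact: min_l. Qed.

Lemma lin0 (f : X -> R) : lin_functional f -> f 0 = 0.
Proof.
move=> lf; have := lf 1 0 0; rewrite scale1r addr0 mul1r => h.
by apply: (addrI (f 0)); rewrite addr0 -h.
Qed.
Lemma linD (f : X -> R) : lin_functional f -> forall x y, f (x + y) = f x + f y.
Proof. by move=> lf x y; rewrite -[x in LHS]scale1r lf mul1r. Qed.
Lemma linZ (f : X -> R) : lin_functional f -> forall a x, f (a *: x) = a * f x.
Proof. by move=> lf a x; rewrite -[a *: x]addr0 lf lin0 // addr0. Qed.
Lemma linN (f : X -> R) : lin_functional f -> forall x, f (- x) = - f x.
Proof. by move=> lf x; rewrite -scaleN1r linZ // mulN1r. Qed.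
Lemma linB (f : X -> R) : lin_functional f -> forall x y, f (x - y) = f x - f y.
Proof. by move=> lf x y; rewrite linD // linN. Qed.

Lemma decomp x : exists a b, [/\ le 0 a, le 0 b & x = a - b].
Proof.
exists (join x 0), (join x 0 - x); split; first exact: L_jr.
- exact: L_sub0 (L_jl _ _).
- by rewrite opprB addrC subrK.
Qed.

Lemma lin_eq_cone (f g : X -> R) : lin_functional f -> lin_functional g ->
  (forall x, le 0 x -> f x = g x) -> forall x, f x = g x.
Proof.
move=> lf lg h x; have [a [b [ha hb ->]]] := decomp x.
by rewrite !linB // !h.
Qed.

Lemma lin_mono (f : X -> R) : lin_functional f -> (forall x, le 0 x -> 0 <= f x) ->
  forall x y, le x y -> f x <= f y.
Proof. by move=> lf fp x y h; rewrite -subr_ge0 -linB //; apply: fp; apply: L_sub0. Qed.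

Lemma ob0 : ob_functional le (fun _ => 0 : R).
Proof.
split; first by move=> a x y; rewrite mulr0 addr0.
by move=> a b; exists 0 => x _ _; rewrite normr0.
Qed.

Lemma obD (f g : X -> R) : ob_functional le f -> ob_functional le g ->
  ob_functional le (fun x => f x + g x).
Proof.
move=> [lf bf] [lg bg]; split.
  by move=> a x y; rewrite lf lg mulrDr addrACA.
move=> a b; have [M1 h1] := bf a b; have [M2 h2] := bg a b.
exists (M1 + M2) => x ha hb; apply: le_trans (ler_normD _ _) _.
by apply: lerD; [apply: h1|apply: h2].
Qed.

Lemma obN (f : X -> R) : ob_functional le f -> ob_functional le (fun x => - f x).
Proof.
move=> [lf bf]; split; first by move=> a x y; rewrite lf opprD mulrN.
by move=> a b; have [M h] := bf a b; exists M => x ha hb; rewrite normrN; apply: h.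
Qed.


Lemma decomp_fun (f P N : X -> R) : ob_functional le f ->
  is_sup_with_zero le f P -> is_sup_with_zero le (fun x => - f x) N ->
  forall x, f x = P x - N x.
Proof.
move=> obf [obP fP P0 minP] [obN' fN N0 minN].
apply: lin_eq_cone; first by case: obf.
  by case: (obD obP (obN obN')).
move=> x x0.
have h1 := minP (fun x => f x + N x) (obD obf obN').
have h2 := minN (fun x => P x - f x) (obD obP (obN obf)).
have := fP x x0; have := P0 x x0; have := fN x x0; have := N0 x x0.
rewrite /= => a b c d.
have e1 : P x <= f x + N x.
  apply: h1 => // y y0; have := fN y y0; have := N0 y y0; rewrite /=; lra.
have e2 : N x <= P x - f x.
  apply: h2 => // y y0; have := fP y y0; have := P0 y y0; rewrite /=; lra.
lra.
Qed.


Lemma meet_subadd x y c : le 0 x -> le 0 y -> le 0 c ->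
  le (meet (x + y) c) (meet x c + meet y c).
Proof.
move=> x0 y0 c0; rewrite [meet x c + _]addrC meet_addl.
have m0 : le 0 (meet y c) by apply: L_mglb.
apply: L_mglb.
- rewrite [_ + x]addrC meet_addl; apply: meet_mono; first exact: L_refl.
  by have := L_addr c x0; rewrite add0r.
- apply: L_trans (L_mr _ _) _.
  by have := L_addr c m0; rewrite add0r.
Qed.

Lemma meet_supadd x y a b : le (meet x a + meet y b) (meet (x + y) (a + b)).
Proof. by apply: L_mglb; apply: L_add2; try apply: L_ml; try apply: L_mr. Qed.

Lemma L_scale0 (t : R) x : 0 <= t -> le 0 x -> le 0 (t *: x).
Proof. by move=> t0 x0; have := L_scale t0 x0; rewrite scaler0. Qed.

Section RK.
Variables (f P : X -> R) (u : X).
Hypotheses (obf : ob_functional le f) (HP : is_sup_with_zero le f P) (u0 : le 0 u)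
  (Hneg : forall y, le 0 y -> le y u -> f y <= 0).

Let lf : lin_functional f. Proof. by case: obf. Qed.
Let lP : lin_functional P. Proof. by case: HP => [[]]. Qed.
Let Ppos x : le 0 x -> 0 <= P x. Proof. by case: HP => _ _ h _; apply: h. Qed.
Let Pf x : le 0 x -> f x <= P x. Proof. by case: HP => _ h _ _; apply: h. Qed.
Let Pmono := lin_mono lP Ppos.

Let S x : set R := fun r => exists s : R, 0 < s /\ r = P (meet x (s *: u)).
Let h x := sup (S x).

Let meet_pos x (s : R) : le 0 x -> 0 < s -> le 0 (meet x (s *: u)).
Proof. by move=> x0 s0; apply: L_mglb => //; apply: L_scale0 => //; apply: ltW. Qed.
Let S_ne x : S x !=set0.
Proof. by exists (P (meet x (1 *: u))); exists 1. Qed.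
Let S_ub x : le 0 x -> ubound (S x) (P x).
Proof. by move=> x0 r [s [s0 ->]]; apply: Pmono; apply: L_ml. Qed.
Let h_ge x r : le 0 x -> S x r -> r <= h x.
Proof. by move=> x0 hr; apply: (ub_le_sup _ hr); exists (P x); apply: S_ub. Qed.
Let h_le x b : ubound (S x) b -> h x <= b.
Proof. by move=> hb; apply: ge_sup. Qed.
Let h_leP x : le 0 x -> h x <= P x.
Proof. by move=> x0; apply: h_le; apply: S_ub. Qed.
Let h_ge0 x : le 0 x -> 0 <= h x.
Proof.
move=> x0; apply: le_trans (h_ge x0 (ex_intro _ 1 (conj ltr01 erefl))).
by apply: Ppos; apply: meet_pos.
Qed.
Let h_geP : P u <= h u.
Proof.
have := h_ge u0 (ex_intro _ 1 (conj ltr01 erefl)).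
by rewrite scale1r meet_idl //; apply: L_refl.
Qed.
Let h0 : h 0 = 0.
Proof.
apply: le_anti; rewrite h_ge0 ?andbT; last exact: L_refl.
by have := h_leP (L_refl 0); rewrite (lin0 lP).
Qed.

Let hD x y : le 0 x -> le 0 y -> h (x + y) = h x + h y.
Proof.
move=> x0 y0; have xy0 : le 0 (x + y) by have := L_add2 x0 y0; rewrite addr0.
apply: le_anti; apply/andP; split.
- apply: h_le => r [s [s0 ->]].
  apply: le_trans (Pmono (meet_subadd x0 y0 (L_scale0 (ltW s0) u0))) _.
  rewrite linD //; apply: lerD; apply: h_ge => //; by exists s.
- have K : forall r1, S x r1 -> h y <= h (x + y) - r1.
    move=> r1 [s [s0 ->]]; apply: h_le => r2 [t [t0 ->]].
    suff : P (meet x (s *: u)) + P (meet y (t *: u)) <= h (x + y) by lra.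
    rewrite -linD //; apply: le_trans (Pmono (meet_supadd _ _ _ _)) _.
    rewrite -scalerDl; apply: h_ge => //; exists (s + t); split => //.
    exact: addr_gt0.
  suff : h x <= h (x + y) - h y by lra.
  apply: h_le => r1 hr1; have := K r1 hr1; lra.
Qed.

Let hZle (t : R) x : 0 < t -> le 0 x -> h (t *: x) <= t * h x.
Proof.
move=> t0 x0; apply: h_le => r [s [s0 ->]].
have -> : s *: u = t *: ((s / t) *: u).
  by rewrite scalerA mulrC divfK // gt_eqF.
rewrite -meet_scale // linZ //; apply: ler_wpM2l; first exact: ltW.
by apply: h_ge => //; exists (s / t); split => //; apply: divr_gt0.
Qed.

Let hZ (t : R) x : 0 <= t -> le 0 x -> h (t *: x) = t * h x.
Proof.
move=> t0 x0; case: (ltP 0 t) => [tp|tn]; last first.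
  have -> : t = 0 by apply: le_anti; rewrite t0 tn.
  by rewrite scale0r h0 mul0r.
apply: le_anti; rewrite hZle //=.
have tx0 : le 0 (t *: x) by apply: L_scale0 => //.
have ti : 0 < t^-1 by rewrite invr_gt0.
have := hZle ti tx0; rewrite scalerA mulVf ?gt_eqF // scale1r => e.
by have := ler_wpM2l (ltW tp) e; rewrite mulrA mulfV ?gt_eqF // mul1r.
Qed.

Let H x := h (join x 0) - h (join x 0 - x).

Let H_diff a b : le 0 a -> le 0 b -> H (a - b) = h a - h b.
Proof.
move=> a0 b0; rewrite /H.
set j := join (a - b) 0; set k := j - (a - b).
have j0 : le 0 j by apply: L_jr.
have k0 : le 0 k by apply: L_sub0; apply: L_jl.
have e : j + b = a + k by rewrite /k opprB addrCA [a + (b - a)]addrCA subrr addr0.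
have := hD j0 b0; rewrite e hD //; lra.
Qed.

Let Hcone x : le 0 x -> H x = h x.
Proof. by move=> x0; rewrite -[x]subr0 H_diff ?h0 ?subr0 //; apply: L_refl. Qed.

Let H_lin : lin_functional H.
Proof.
move=> a x y.
have [x1 [x2 [x10 x20 ->]]] := decomp x.
have [y1 [y2 [y10 y20 ->]]] := decomp y.
rewrite !H_diff //.
case: (boolP (0 <= a)) => a0.
- have -> : a *: (x1 - x2) + (y1 - y2) = (a *: x1 + y1) - (a *: x2 + y2).
    by rewrite scalerBr addrACA opprD.
  have p1 : le 0 (a *: x1 + y1) by have := L_add2 (L_scale0 a0 x10) y10; rewrite addr0.
  have p2 : le 0 (a *: x2 + y2) by have := L_add2 (L_scale0 a0 x20) y20; rewrite addr0.
  have s1 := L_scale0 a0 x10; have s2 := L_scale0 a0 x20.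
  rewrite H_diff // !hD // (hZ a0 x10) (hZ a0 x20); ring.
- have b0 : 0 <= - a by move: a0; rewrite -ltNge oppr_ge0 => /ltW.
  have -> : a *: (x1 - x2) + (y1 - y2) = ((- a) *: x2 + y1) - ((- a) *: x1 + y2).
    by rewrite scalerBr !scaleNr opprD opprK [RHS]addrACA [- _ + a *: x1]addrC.
  have p1 : le 0 ((- a) *: x2 + y1) by have := L_add2 (L_scale0 b0 x20) y10; rewrite addr0.
  have p2 : le 0 ((- a) *: x1 + y2) by have := L_add2 (L_scale0 b0 x10) y20; rewrite addr0.
  have s1 := L_scale0 b0 x10; have s2 := L_scale0 b0 x20.
  rewrite H_diff // !hD // (hZ b0 x10) (hZ b0 x20); ring.
Qed.

Let g x := P x - H x.

Let g_ob : ob_functional le g.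
Proof.
split; first by move=> a x y; rewrite /g lP H_lin; ring.
move=> a b; have [M hM] := (match HP with And4 (conj _ bP) _ _ _ => bP end) a b.
exists (M + (`|H a| + P (b - a))) => x ha hb.
have xa0 : le 0 (x - a) by apply: L_sub0.
have eH : H x = H a + h (x - a) by rewrite -Hcone // -linD // addrC subrK.
apply: le_trans (ler_normB _ _) _; apply: lerD; first exact: hM.
rewrite eH; apply: le_trans (ler_normD _ _) _; apply: lerD => //.
rewrite ger0_norm ?h_ge0 //; apply: le_trans (h_leP xa0) _.
by apply: Pmono; apply: L_addr.
Qed.

Lemma RK_sign : P u <= 0.
Proof.
case: HP => _ _ _ minP.
have : fle le P g.
  apply: minP; first exact: g_ob.
  - move=> x x0; rewrite /g Hcone //.
    suff : h x <= P x - f x by lra.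
    apply: h_le => r [s [s0 ->]].
    set m := meet x (s *: u).
    have m0 : le 0 m by apply: meet_pos.
    have fm : f m <= 0.
      have si : 0 < s^-1 by rewrite invr_gt0.
      have := Hneg (L_scale0 (ltW si) m0).
      rewrite linZ //; rewrite pmulr_rle0 //; apply.
      rewrite -[u](scale1r) -(mulVf (lt0r_neq0 s0)) -scalerA.
      by apply: L_scale; [apply: ltW|apply: L_mr].
    have := Pf (L_sub0 (L_ml x (s *: u))); rewrite !linB //; lra.
  - by move=> x x0; rewrite /g Hcone // subr_ge0; apply: h_leP.
move/(_ u u0); rewrite /g Hcone //; have := h_geP; lra.
Qed.

End RK.


Lemma key (f : X -> R) u v u' v' c : lin_functional f ->
  G_subspace join meet (ker f) -> le 0 u -> le 0 v -> meet u v = 0 ->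
  le 0 u' -> le u' u -> le 0 v' -> le v' v -> le 0 c ->
  0 < f u' -> 0 < f v' -> f c < 0 -> False.
Proof.
move=> lf [_ Gs] u0 v0 muv u'0 u'u v'0 v'v c0 fu fv fc.
set be := f u' / f v'; set al := f u' / - f c.
have be0 : 0 < be by apply: divr_gt0 => //; lra.
have al0 : 0 < al by apply: divr_gt0 => //; lra.
have fc0 : f c != 0 by rewrite ltr0_neq0.
have fv0 : f v' != 0 by rewrite lt0r_neq0.
have e1 : al * f c = - f u'.
  by rewrite /al invrN mulrN mulNr -mulrA mulVf // mulr1.
have e2 : be * f v' = f u' by rewrite /be divfK.
set a := u'; set b := be *: v'.
set x' := a + al *: c; set y' := b + al *: c.
have b0 : le 0 b by apply: L_scale0 => //; apply: ltW.
have c0' : le 0 (al *: c) by apply: L_scale0 => //; apply: ltW.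
have x'0 : le 0 x' by have := L_add2 u'0 c0'; rewrite addr0.
have y'0 : le 0 y' by have := L_add2 b0 c0'; rewrite addr0.
have fx : ker f x' by rewrite /ker /x' linD // linZ // e1 subrr.
have fy : ker f y' by rewrite /ker /y' linD // !linZ // e1 e2 subrr.
have := Gs x' y' fx fy; rewrite /ker.
rewrite join_idl; last exact: L_trans x'0 (L_jl _ _).
rewrite [meet (meet _ _) 0]meetC meet_idl; last exact: L_mglb.
rewrite addr0 /x' /y' ![_ + al *: c]addrC -join_addl.
have mab : meet a b = 0.
  apply: L_anti; last exact: L_mglb.
  have g0 : 0 < 1 + be by apply: addr_gt0.
  rewrite -(scaler0 _ (1 + be)) -muv meet_scale //.
  apply: meet_mono; rewrite scalerDl scale1r.
  - apply: L_trans u'u _; have := L_addl u (L_scale0 (ltW be0) u0); rewrite addr0; done.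
  - apply: L_trans (L_scale (ltW be0) v'v) _; have := L_addr (be *: v) v0; rewrite add0r; done.
have -> : join a b = a + b by rewrite (add_join_meet a b) mab addr0.
rewrite !linD // !linZ // e1 e2; lra.
Qed.

Lemma core (f P N : X -> R) : ob_functional le f -> is_sup_with_zero le f P ->
  is_sup_with_zero le (fun x => - f x) N -> N <> (fun _ => 0) ->
  G_subspace join meet (ker f) -> riesz_hom join meet P.
Proof.
move=> obf HP HN Nn Gf.
have lf : lin_functional f by case: obf.
have lP : lin_functional P by case: HP => [[]].
have Ppos x : le 0 x -> 0 <= P x by case: HP => _ _ h _; apply: h.
have [c [c0 fc]] : exists c, le 0 c /\ f c < 0.
  apply: NNPP => hn; apply: Nn.
  have fpos x : le 0 x -> 0 <= f x.
    move=> x0; rewrite leNgt; apply/negP => h; apply: hn; by exists x.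
  case: HN => [[lN _] _ N0 minN].
  have hN := minN _ ob0 (fun x x0 => (le_trans (eqbRL (oppr_le0 _) (fpos x x0)) (lexx 0)))
    (fun x _ => lexx 0).
  apply: functional_extensionality; apply: lin_eq_cone => //.
    by move=> a x y; rewrite mulr0 addr0.
  move=> x x0; apply: le_anti; rewrite hN //=; exact: N0.
have pos u : le 0 u -> 0 < P u -> exists u', [/\ le 0 u', le u' u & 0 < f u'].
  move=> u0 Pu; apply: NNPP => hn.
  suff : P u <= 0 by rewrite leNgt Pu.
  apply: (RK_sign obf HP u0).
  move=> y y0 yu; rewrite leNgt; apply/negP => h; apply: hn; by exists y.
have RH x y : P (join x y) = Num.max (P x) (P y).
  set w := x - y; set uu := join w 0; set vv := uu - w.
  have uu0 : le 0 uu by apply: L_jr.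
  have vv0 : le 0 vv by apply: L_sub0; apply: L_jl.
  have jw : join 0 (- w) = - w + uu.
    by rewrite /uu join_addl addNr addr0.
  have muv : meet uu vv = 0.
    rewrite /vv -[X in meet X _]addr0 -meet_addl.
    have e := add_join_meet 0 (- w); rewrite jw add0r -addrA in e.
    by apply: (addrI (- w)); rewrite addr0 -e.
  have alt : P uu = 0 \/ P vv = 0.
    apply: NNPP => hn.
    have pu : 0 < P uu by rewrite lt_def Ppos // andbT; apply/eqP => h; apply: hn; left.
    have pv : 0 < P vv by rewrite lt_def Ppos // andbT; apply/eqP => h; apply: hn; right.
    have [u' [u'0 u'u fu']] := pos _ uu0 pu.
    have [v' [v'0 v'v fv']] := pos _ vv0 pv.
    exact: (key lf Gf uu0 vv0 muv u'0 u'u v'0 v'v c0 fu' fv' fc).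
  have ej : join x y = y + uu by rewrite /uu join_addl addr0 [y + _]addrC subrK.
  have ev : P vv = P uu - (P x - P y) by rewrite /vv !linB.
  have := Ppos _ uu0; have := Ppos _ vv0.
  rewrite ej linD //; case: alt => e; rewrite e in ev * => h1 h2.
  - have hle : P x <= P y by lra.
    by rewrite addr0; symmetry; exact: (maxR hle).
  - have hle : P y <= P x by lra.
    have -> : P y + P uu = P x by lra.
    by symmetry; exact: (maxL hle).
split => // x y.
have := congr1 P (add_join_meet x y); rewrite !linD // RH.
by case: (leP (P x) (P y)) => h; lra.
Qed.


Lemma sup_ext (f f' P : X -> R) : (forall x, f x = f' x) ->
  is_sup_with_zero le f P -> is_sup_with_zero le f' P.
Proof.
move=> e [obP fP P0 minP]; split => //.
  by move=> x x0; rewrite -e; apply: fP.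
move=> g obg fg g0; apply: minP => // x x0; rewrite e; exact: fg.
Qed.

Lemma G_neg (f : X -> R) : G_subspace join meet (ker f) ->
  G_subspace join meet (ker (fun x => - f x)).
Proof.
have E z : ker (fun x => - f x) z <-> ker f z.
  by rewrite /ker; split => [/eqP|/eqP]; rewrite ?oppr_eq0 => /eqP ->; rewrite ?oppr0.
case=> [[h0 hl] hg]; split; [split|].
- by apply/E.
- by move=> a x y /E hx /E hy; apply/E; apply: hl.
- by move=> x y /E hx /E hy; apply/E; apply: hg.
Qed.

End Lat.

Theorem lemma2 (R : realType) (X : lmodType R)
    (le : X -> X -> Prop) (join meet : X -> X -> X)
    (l lp ln : X -> R) :
  vector_lattice le join meet ->
  ob_functional le l ->
  is_pos_part le l lp ->
  is_neg_part le l ln ->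
  lp <> (fun _ => 0) ->
  ln <> (fun _ => 0) ->
  (G_subspace join meet (ker l) <-> (riesz_hom join meet lp /\ riesz_hom join meet ln)) /\
  ((riesz_hom join meet lp /\ riesz_hom join meet ln) <-> riesz_subspace join meet (ker l)).
Proof.
move=> VL obl HP HN Pn Nn.
have ll : lin_functional l by case: obl.
have d := decomp_fun VL obl HP HN.
have HP' : is_sup_with_zero le (fun x => - - l x) lp.
  by apply: (sup_ext _ HP) => x; rewrite opprK.
have GR : G_subspace join meet (ker l) ->
    riesz_hom join meet lp /\ riesz_hom join meet ln.
  move=> G; split; first exact: (core VL obl HP HN Nn G).
  exact: (core VL (obN obl) HN HP' Pn (G_neg G)).
have RS : riesz_hom join meet lp /\ riesz_hom join meet ln ->
    riesz_subspace join meet (ker l).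
  move=> [[lP jP mP] [lN jN mN]].
  have ls : lin_subspace (ker l).
    split; first by rewrite /ker (lin0 ll).
    by move=> a x y; rewrite /ker ll => -> ->; rewrite mulr0 addr0.
  have eq0 x : ker l x -> lp x = ln x.
    by rewrite /ker d => /eqP; rewrite subr_eq0 => /eqP.
  split => // x y /eq0 hx /eq0 hy; rewrite /ker d.
  - by rewrite jP jN hx hy subrr.
  - by rewrite mP mN hx hy subrr.
have SG : riesz_subspace join meet (ker l) -> G_subspace join meet (ker l).
  move=> [ls hj hm]; split => // x y hx hy.
  have z0 : ker l 0 by case: ls.
  rewrite -[join _ _]scale1r; apply: ls.2.
  - by apply: (hj) => //; apply: (hj).
  - by apply: (hm) => //; apply: (hm).
split; split => //.
- by move=> h; apply: SG; apply: RS.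
- by move=> h; apply: GR; apply: SG.
Qed.
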